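(* Let $d\ge 3$, $n\ge 2$ be integers. There exists a proper algebraic subvariety $\Sigma(n,d)\subset\mathrm{Sym}(n,d,\mathbb{C})$ such that for each $\mathcal{T}\in\mathrm{Sym}(n,d,\mathbb{C})\setminus\Sigma(n,d)$ the system $$(1)\qquad \mathcal{T}\times\otimes^{d-1}\mathbf{x}=\mathbf{x},\quad \mathbf{x}\in\mathbb{C}^n\setminus\{\mathbf{0}\}$$ has at most $(d-1)^n-1$ distinct solutions, and the solution set is invariant under multiplication by $(d-2)$-th roots of unity. Assume moreover that $\mathcal{T}\in\mathrm{Sym}(n,d)\setminus\Sigma(n,d)$ is real. If $d$ is odd, then the number of distinct real solutions of (1) is at most $\frac{(d-1)^n-1}{d-2}$, and every real solution of $$(2)\qquad \mathcal{T}\times\otimes^{d-1}\mathbf{x}=-\mathbf{x},\quad \mathbf{x}\neq\mathbf{0}$$ is the negative of a real solution of (1). If $d$ is even, then the systems (1) and (2) together have at most $\frac{2((d-1)^n-1)}{d-2}$ real solutions, and this set of real solutions is invariant under multiplication by $-1$.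
   Context: $\mathrm{Sym}(n,d,\mathbb{C})$ is the space of complex tensors $\mathcal{T}=[t_{i_1,\ldots,i_d}]_{i_1,\ldots,i_d=1}^n$ whose entries are invariant under any permutation of indices, and $\mathrm{Sym}(n,d)\subset\mathrm{Sym}(n,d,\mathbb{C})$ is the real subspace of real such tensors. For $\mathbf{x}=(x_1,\ldots,x_n)^\top\in\mathbb{C}^n$, $\mathcal{T}\times\otimes^{d-1}\mathbf{x}\in\mathbb{C}^n$ is the vector with $i$-th coordinate $\sum_{i_2,\ldots,i_d=1}^n t_{i,i_2,\ldots,i_d}x_{i_2}\cdots x_{i_d}$ (no complex conjugation). *)

(* Defs.v *)
From HB Require Import structures.
From mathcomp Require Import all_boot all_order all_algebra all_fingroup.
From mathcomp Require Import reals.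
From mathcomp Require Import complex.
From mathcomp Require mpoly.

Set Implicit Arguments. Unset Strict Implicit. Unset Printing Implicit Defensive.
Import Order.TTheory GRing.Theory Num.Theory.
Local Open Scope ring_scope.

Definition midx (n d : nat) := {ffun 'I_d -> 'I_n}.

Definition tensor (K : Type) (n d : nat) := {ffun midx n d -> K}.

Definition sym_tensor (K : Type) (n d : nat) (T : tensor K n d) : Prop :=
  forall (s : 'S_d) (i : midx n d), T [ffun k => i (s k)] = T i.

(* (T x ⊗^{d-1} x)_i = sum_{i_2..i_d} t_{i,i_2,..,i_d} x_{i_2}...x_{i_d}
   (index position 0 is the free index; no conjugation). *)
Definition contr (K : comNzRingType) (n d : nat) (T : tensor K n d)
  (x : 'rV[K]_n) : 'rV[K]_n :=
  \row_(i < n) \sum_(j : midx n d | [forall k : 'I_d, (val k == 0%N) ==> (j k == i)])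
     (T j * \prod_(k : 'I_d | val k != 0%N) x 0 (j k)).

Definition sol1 (K : comNzRingType) (n d : nat) (T : tensor K n d) (x : 'rV[K]_n) : Prop :=
  x != 0 /\ contr T x = x.

Definition sol2 (K : comNzRingType) (n d : nat) (T : tensor K n d) (x : 'rV[K]_n) : Prop :=
  x != 0 /\ contr T x = - x.

(* Polynomials in the coordinates (entries) of Sym(n,d,C) ⊂ C^{n^d}:
   variable number v corresponds to the entry indexed by enum_val v. *)
Definition coordpoly (K : comNzRingType) (n d : nat) :=
  mpoly.mpoly #|{: midx n d}| K.

Definition peval (K : comNzRingType) (n d : nat) (p : coordpoly K n d)
  (T : tensor K n d) : K :=
  mpoly.meval (fun v : 'I_#|{: midx n d}| => T (enum_val v)) p.

Definition in_variety (K : comNzRingType) (n d : nat) (ps : seq (coordpoly K n d))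
  (T : tensor K n d) : Prop :=
  sym_tensor T /\ all (fun p => peval p T == 0) ps.

Definition proper_variety (K : comNzRingType) (n d : nat) (ps : seq (coordpoly K n d)) : Prop :=
  exists T : tensor K n d, sym_tensor T /\ ~ in_variety ps T.

Definition cplx (R : rcfType) (r : R) : R[i] := Complex r 0.

Definition ctensor (R : rcfType) (n d : nat) (T : tensor R n d) : tensor R[i] n d :=
  [ffun j => cplx (T j)].

Definition cvec (R : rcfType) (n : nat) (x : 'rV[R]_n) : 'rV[R[i]]_n :=
  map_mx (@cplx R) x.

(* Main.v *)
Require Import Defs.
From HB Require Import structures.
From mathcomp Require Import all_boot all_order all_algebra all_fingroup all_solvable all_field.
From mathcomp Require Import reals.
From mathcomp Require Import complex.
From mathcomp Require Import mpoly.
From mathcomp Require Import zify.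
Import Order.TTheory GRing.Theory Num.Theory.
Local Open Scope ring_scope.
Set Implicit Arguments. Unset Strict Implicit. Unset Printing Implicit Defensive.

Lemma card_nz (d : nat) : (0 < d)%N -> #|[pred k : 'I_d | val k != 0%N]| = d.-1.
Proof.
case: d => [//|d] _.
transitivity #|predC1 (@ord0 d)|; last by rewrite cardC1 card_ord.
by apply: eq_card => k; rewrite !inE.
Qed.

Lemma contrZ (K : comNzRingType) n d (T : tensor K n d) (a : K) x :
  (0 < d)%N -> contr T (a *: x) = a ^+ d.-1 *: contr T x.
Proof.
move=> d0; apply/rowP => i; rewrite !mxE mulr_sumr; apply: eq_bigr => j _.
rewrite mulrCA; congr (_ * _).
under eq_bigr => k _ do rewrite mxE.
by rewrite big_split /= prodr_const card_nz.
Qed.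

Lemma prim_root_ex (R : rcfType) (k : nat) : (k > 0)%N -> {z : R[i] | k.-primitive_root z}.
Proof.
pose p : {poly R[i]} := 'X^k - 1; have [r Dp] := closed_field_poly_normal p.
move=> n_gt0; apply/sigW; rewrite (monicP _) ?monicXnsubC // scale1r in Dp.
have rn1: all k.-unity_root r by apply/allP=> z; rewrite -root_prod_XsubC -Dp.
have sz_r: (k < (size r).+1)%N.
  by rewrite -(size_prod_XsubC r id) -Dp size_XnsubC.
have [|z] := hasP (has_prim_root n_gt0 rn1 _ sz_r); last by exists z.
by rewrite -separable_prod_XsubC -Dp separable_Xn_sub_1 // pnatr_eq0 -lt0n.
Qed.
Section Mono.
Variables (K : comNzRingType) (n d : nat).

Definition xm (x : 'rV[K]_n) (b : 'X_{1..n}) : K := \prod_(l < n) x 0 l ^+ b l.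

Definition mono (j : midx n d) : 'X_{1..n} :=
  [multinom #|[pred k : 'I_d | (val k != 0%N) && (j k == l)]| | l < n].

Definition cnd (i : 'I_n) (j : midx n d) :=
  [forall k : 'I_d, (val k == 0%N) ==> (j k == i)].

Lemma xmD x a b : xm x (a + b)%MM = xm x a * xm x b.
Proof.
by rewrite /xm -big_split /=; apply: eq_bigr => l _; rewrite mnmDE exprD.
Qed.

Lemma xmU x i : xm x U_(i)%MM = x 0 i.
Proof.
rewrite /xm (bigD1 i) //= mnm1E eqxx expr1 big1 ?mulr1 // => l /negPf.
by rewrite mnm1E eq_sym => ->.
Qed.

Lemma xm_mono x j : xm x (mono j) = \prod_(k : 'I_d | val k != 0%N) x 0 (j k).
Proof.
rewrite (partition_big j predT) //=; apply: eq_bigr => l _.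
rewrite mnmE.
transitivity (\prod_(k in [pred k : 'I_d | (val k != 0%N) && (j k == l)]) x 0 l).
  by rewrite prodr_const.
by apply: eq_big => k; rewrite ?inE // => /andP [_ /eqP ->].
Qed.

Lemma mdeg_mono j : (0 < d)%N -> mdeg (mono j) = d.-1.
Proof.
move=> d0; rewrite mdegE -card_nz // -sum1_card.
rewrite (partition_big j predT) //=; apply: eq_bigr => l _.
by rewrite mnmE -sum1_card.
Qed.

Lemma contr_mono T x i :
  contr T x 0 i = \sum_(j : midx n d | cnd i j) T j * xm x (mono j).
Proof. by rewrite mxE; apply: eq_bigr => j _; rewrite xm_mono. Qed.

Definition macE (T : tensor K n d) (a : 'X_{1..n}) (i : 'I_n) (b : 'X_{1..n}) : K :=
  \sum_(j : midx n d | cnd i j && ((a + mono j)%MM == b)) T j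
  - (b == (a + U_(i))%MM)%:R.

Lemma sum_mon_pick D (F : 'X_{1..n} -> K) (b : 'X_{1..n}) : (mdeg b < D.+1)%N ->
  \sum_(c : 'X_{1..n < D.+1}) (if b == val c then F (val c) else 0) = F b.
Proof.
move=> hb; pose c0 : 'X_{1..n < D.+1} := BMultinom hb.
rewrite (bigD1 c0) //= eqxx big1 ?addr0 // => c hc.
by case: eqP => // e; case/negP: hc; apply/eqP/val_inj.
Qed.

Lemma macrow D (T : tensor K n d) (x : 'rV[K]_n) (a : 'X_{1..n}) i :
  (0 < d)%N -> (mdeg a + d.-1 <= D)%N -> (mdeg a + 1 <= D)%N ->
  \sum_(c : 'X_{1..n < D.+1}) macE T a i c * xm x c =
  xm x a * (contr T x 0 i - x 0 i).
Proof.
move=> d0 ha1 ha2.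
rewrite /macE; under eq_bigr => c _ do rewrite mulrBl.
rewrite sumrB mulrBr; congr (_ - _); last first.
  under eq_bigr => c _ do rewrite mulr_natl mulrb eq_sym.
  by rewrite (sum_mon_pick (fun c => xm x c)) ?mdegD ?mdeg1 ?ltnS // xmD xmU.
rewrite contr_mono mulr_sumr.
under eq_bigr => c _ do rewrite big_distrl /= big_mkcondr /=.
rewrite exchange_big /=; apply: eq_bigr => j _.

rewrite (sum_mon_pick (fun c => T j * xm x c)).
  by rewrite xmD mulrCA.
by rewrite mdegD mdeg_mono // ltnS.
Qed.

End Mono.
Section LinAlg.
Variable K : fieldType.

Lemma rank_bound p q N (A : 'M[K]_(p,q)) (E : 'M[K]_(q,N)) (C : 'M[K]_(N,q)) :
  A *m E = 0 -> C *m E = 1%:M -> (\rank A + N <= q)%N.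
Proof.
move=> hAE hCE.
have h1 : (A <= kermx E)%MS by rewrite sub_kermx hAE.
have h2 := mxrankS h1; rewrite mxrank_ker in h2.
have h3 : (N <= \rank E)%N by rewrite -{1}(mxrank1 K N) -hCE mxrankM_maxr.
have h4 := rank_leq_row E.
apply: (leq_trans (leq_add h2 h3)); by rewrite subnK.
Qed.

Lemma rank_colsub p q r (B : 'M[K]_(p,q)) (g : 'I_r -> 'I_q) :
  (\rank (colsub g B) <= \rank B)%N.
Proof.
rewrite -mxrank_tr trmx_mxsub -(mxrank_tr B).
by rewrite (rowsubE g) mxrankM_maxr.
Qed.

Lemma minor_rank p q r (A : 'M[K]_(p,q)) (f : 'I_r -> 'I_p) (g : 'I_r -> 'I_q) :
  \det (colsub g (rowsub f A)) != 0 -> (r <= \rank A)%N.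
Proof.
move=> hdet.
have hu : colsub g (rowsub f A) \in unitmx by rewrite unitmxE unitfE.
apply: (@leq_trans (\rank (colsub g (rowsub f A)))); first by rewrite mxrank_unit.
apply: (leq_trans (rank_colsub (rowsub f A) g)).
by rewrite rowsubE mxrankM_maxr.
Qed.

Lemma minor_exists p q (A : 'M[K]_(p,q)) :
  exists f : 'I_(\rank A) -> 'I_p, exists g : 'I_(\rank A) -> 'I_q,
    \det (colsub g (rowsub f A)) != 0.
Proof.
pose f := maxrankfun A.
have hB : row_free (rowsub f A) := maxrowsub_free A.
have hF : row_full (rowsub f A)^T.
  by rewrite /row_full mxrank_tr; exact: hB.
exists f, (fullrankfun hF).
have := fullrowsub_unit hF.
rewrite -trmx_mxsub unitmxE det_tr unitfE.
done.
Qed.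
End LinAlg.
Lemma sum_enum (R : nmodType) (I : finType) (F : I -> R) :
  \sum_(i < #|{: I}|) F (enum_val i) = \sum_(i : I) F i.
Proof. by rewrite -big_enum_val. Qed.

Section Mac.
Variables (K : comNzRingType) (n d D : nat).

Local Notation Mon := ('X_{1..n < D.+1}).
Local Notation RowT := (('X_{1..n < (D - d.-1).+1} * 'I_n)%type).

Definition Mac (T : tensor K n d) : 'M[K]_(#|{: RowT}|, #|{: Mon}|) :=
  \matrix_(r, c) macE T (val (enum_val r).1) (enum_val r).2 (val (enum_val c)).

Lemma Mac_eval (T : tensor K n d) (x : 'rV[K]_n) r :
  (1 < d)%N -> (d.-1 <= D)%N -> contr T x = x ->
  \sum_(c < #|{: Mon}|) Mac T r c * xm x (val (enum_val c)) = 0.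
Proof.
move=> d1 dD hx.
under eq_bigr => c _ do rewrite mxE.
rewrite (sum_enum (fun c : Mon => macE T (val (enum_val r).1) (enum_val r).2 (val c) * xm x (val c))).
have ha := bmdeg (enum_val r).1.
rewrite macrow; first by rewrite hx subrr mulr0.
- by apply: leq_trans d1.
- by rewrite addnC -leq_subRL // -ltnS.
- rewrite addn1; apply: leq_ltn_trans (_ : D - d.-1 < D)%N; first by rewrite -ltnS.
  rewrite ltn_subrL; apply/andP; split; first by case: d d1 => [|[]].
  by apply: leq_trans dD; case: d d1 => [|[]].
Qed.
End Mac.
Section Interp.
Variables (K : fieldType) (n D : nat).
Local Notation Mon := ('X_{1..n < D.+1}).

Definition ev (x : 'rV[K]_n) (p : {mpoly K[n]}) : K := p.@[fun l => x 0 l].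

Definition fac (x y : 'rV[K]_n) : {mpoly K[n]} :=
  if [pick l | x 0 l != y 0 l] is Some l then 'X_l - (y 0 l)%:MP else 1.

Lemma fac_y x y : x != y -> ev y (fac x y) = 0.
Proof.
rewrite /fac /ev; case: pickP => [l hl|h] hxy.
  by rewrite mevalB mevalXU mevalC subrr.
case/eqP: hxy; apply/rowP => i; apply/eqP.
by have := h i; rewrite /= => /negbFE.
Qed.

Lemma fac_x x y : ev x (fac x y) != 0.
Proof.
rewrite /fac /ev; case: pickP => [l hl|h].
  by rewrite mevalB mevalXU mevalC subr_eq0.
by rewrite meval1 oner_neq0.
Qed.

Lemma fac_size x y : (msize (fac x y) <= 2)%N.
Proof.
rewrite /fac; case: pickP => [l hl|h]; last by rewrite msize1.
apply: leq_trans (msizeD_le _ _) _.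
rewrite msizeN msizeX mdeg1 geq_max leqnn /=.
by rewrite msizeC; case: (_ != 0).
Qed.

Lemma msizeM_le' (p q : {mpoly K[n]}) : (msize (p * q) <= (msize p + msize q).-1)%N.
Proof.
have [->|np] := eqVneq p 0; first by rewrite mul0r msize0.
have [->|nq] := eqVneq q 0; first by rewrite mulr0 msize0.
by rewrite msizeM.
Qed.

Lemma msize_prod (I : Type) (r : seq I) (P : pred I) (F : I -> {mpoly K[n]}) :
  (forall i, msize (F i) <= 2)%N -> (msize (\prod_(i <- r | P i) F i) <= (size r).+1)%N.
Proof.
move=> hF; elim: r => [|a r IH]; first by rewrite big_nil msize1.
rewrite big_cons /=; case: (P a); last by apply: leq_trans IH _.
apply: leq_trans (msizeM_le' _ _) _.
have := leq_add (hF a) IH; rewrite addSn addnS /= => h.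
move: h; case: (_ + _)%N => [|s] //=; by rewrite add1n.
Qed.

Lemma ev_expand (x : 'rV[K]_n) (p : {mpoly K[n]}) : (msize p <= D.+1)%N ->
  ev x p = \sum_(c : Mon) p@_c * xm x c.
Proof.
move=> hp; rewrite /ev {1}(mpolywE hp) raddf_sum; apply: eq_bigr => c _ /=.
by rewrite mevalZ mevalX.
Qed.

Variables (N : nat) (pt : 'I_N -> 'rV[K]_n).
Hypothesis pt_inj : injective pt.
Hypothesis ND : (N <= D)%N.

Definition Lag (k : 'I_N) : {mpoly K[n]} := \prod_(k' < N | k' != k) fac (pt k) (pt k').

Lemma Lag_size k : (msize (Lag k) <= D.+1)%N.
Proof.
have := @msize_prod _ (index_enum 'I_N) (fun k' => k' != k) (fun i => fac (pt k) (pt i)) (fun i => fac_size _ _).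
rewrite /Lag => h; apply: leq_trans h _.
by rewrite [index_enum _]unlock -enumT size_enum_ord ltnS.
Qed.

Lemma Lag_ev k k2 : ev (pt k2) (Lag k) = if k2 == k then ev (pt k) (Lag k) else 0.
Proof.
case: eqP => [->//|/eqP nk].
have nk' : pt k != pt k2 by apply: contra nk => /eqP /pt_inj ->.
have := fac_y nk'; rewrite /ev /Lag rmorph_prod (bigD1 k2) //= => ->.
by rewrite mul0r.
Qed.

Lemma Lag_ev_neq0 k : ev (pt k) (Lag k) != 0.
Proof.
rewrite /ev /Lag rmorph_prod; apply/prodf_neq0 => k' _.
exact: (fac_x (pt k) (pt k')).
Qed.

Definition Emat : 'M[K]_(#|{: Mon}|, N) := \matrix_(c, k) xm (pt k) (val (enum_val c)).
Definition Cmat : 'M[K]_(N, #|{: Mon}|) :=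
  \matrix_(k, c) ((ev (pt k) (Lag k))^-1 * (Lag k)@_(val (enum_val c))).

Lemma CE1 : Cmat *m Emat = 1%:M.
Proof.
apply/matrixP => k k2; rewrite !mxE.
under eq_bigr => c _ do rewrite !mxE -mulrA.
rewrite -mulr_sumr.
rewrite (sum_enum (fun c : Mon => (Lag k)@_c * xm (pt k2) c)).
rewrite -ev_expand ?Lag_size // [ev (pt k2) _]Lag_ev.
case: eqP => [e|nk]; first by rewrite e eqxx mulVf ?Lag_ev_neq0.
by rewrite mulr0; case: eqP => // e; case: nk.
Qed.
End Interp.
Lemma sum_eq1 (K : nzRingType) (I : finType) (P : pred I) (c : I) :
  \sum_(j | P j) ((j == c)%:R : K) = (P c)%:R.
Proof.
rewrite big_mkcond (bigD1 c) //= eqxx big1 ?addr0.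
  by case: (P c).
by move=> j /negPf ->; case: (P j).
Qed.

Lemma enum_val_eq (I : finType) (c : 'I_#|{: I}|) (b : I) :
  (enum_val c == b) = (c == enum_rank b).
Proof.
by apply/eqP/eqP => [<-|->]; rewrite ?enum_valK ?enum_rankK.
Qed.

Section Witness.
Variables (K : fieldType) (n d D : nat).
Local Notation Mon := ('X_{1..n < D.+1}).
Local Notation RowT := (('X_{1..n < (D - d.-1).+1} * 'I_n)%type).
Local Notation RedT := ({ffun 'I_n -> 'I_(d.-1)}).

Definition cst (i : 'I_n) : midx n d := [ffun _ => i].
Definition T0 : tensor K n d := [ffun j : midx n d => ([forall k1, forall k2, j k1 == j k2] : bool)%:R].

Lemma T0_sym : sym_tensor T0.
Proof.
move=> s i; rewrite !ffunE; congr ((_ : bool)%:R).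
apply/forallP/forallP => h k1; apply/forallP => k2.
  by have /forallP := h (s^-1 k1)%g => /(_ (s^-1 k2)%g); rewrite !ffunE !permKV.
by have /forallP := h (s k1) => /(_ (s k2)); rewrite !ffunE.
Qed.

Lemma T0_cnd i j : (0 < d)%N -> cnd i j -> T0 j = (j == cst i)%:R.
Proof.
move=> d0 /forallP hc; rewrite ffunE; congr ((_ : bool)%:R).
have hj0 : j (Ordinal d0) = i by apply/eqP; have := hc (Ordinal d0); rewrite eqxx.
apply/forallP/eqP => [h|->].
  apply/ffunP => k; rewrite ffunE -hj0.
  by have /forallP := h k => /(_ (Ordinal d0)) /eqP.
by move=> k1; apply/forallP => k2; rewrite !ffunE.
Qed.

Lemma cnd_cst i : cnd i (cst i).
Proof. by apply/forallP => k; rewrite ffunE eqxx implybT. Qed.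

Lemma mono_cst i l : (0 < d)%N -> mono (cst i) l = if i == l then d.-1 else 0%N.
Proof.
move=> d0; rewrite mnmE; case: eqP => [->|nil].
  rewrite -card_nz //; apply: eq_card => k; by rewrite !inE ffunE eqxx andbT.
have nil2 : (i == l) = false by apply/eqP.
apply: eq_card0 => k; by rewrite !inE ffunE nil2 andbF.
Qed.

Lemma macE_T0 a i b : (0 < d)%N ->
  macE T0 a i b = (b == (a + mono (cst i))%MM)%:R - (b == (a + U_(i))%MM)%:R.
Proof.
move=> d0; rewrite /macE; congr (_ - _).
rewrite (eq_bigr (fun j => (j == cst i)%:R)); last first.
  by move=> j /andP [hc _]; rewrite (T0_cnd d0 hc).
by rewrite sum_eq1 cnd_cst eq_sym.
Qed.

Definition mnm_of (f : RedT) : 'X_{1..n} := [multinom val (f l) | l < n].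

Definition Red : 'M[K]_(#|{: RedT}|, #|{: Mon}|) :=
  \matrix_(r, c) (val (enum_val c) == mnm_of (enum_val r))%:R.

Hypothesis d3 : (2 < d)%N.
Hypothesis dD : (d.-1 <= D)%N.

Let d0 : (0 < d)%N. Proof. by apply: leq_trans d3. Qed.
Let d2 : (2 <= d.-1)%N. Proof. by case: d d3 => [|[|[]]]. Qed.

Lemma caseA (b : Mon) : (forall l, b l < d.-1)%N ->
  (delta_mx (0 : 'I_1) (enum_rank b) <= Mac D T0 + Red)%MS.
Proof.
move=> h; pose f : RedT := [ffun l => Ordinal (h l)].
have -> : delta_mx (0 : 'I_1) (enum_rank b) = row (enum_rank f) Red.
  apply/rowP => c; rewrite !mxE enum_rankK.
  have -> : mnm_of f = val b by apply/mnmP => l; rewrite mnmE ffunE.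
  by rewrite val_eqE enum_val_eq eqxx.
exact: submx_trans (row_sub _ _) (addsmxSr _ _).
Qed.

Lemma rowB (b : Mon) l : (d.-1 <= b l)%N ->
  exists a' : 'X_{1..n < (D - d.-1).+1}, exists b2 : Mon,
    (mdeg b2 < mdeg b)%N /\
    row (enum_rank ((a', l) : RowT)) (Mac D T0) =
      delta_mx (0 : 'I_1) (enum_rank b) - delta_mx (0 : 'I_1) (enum_rank b2).
Proof.
move=> hl.
have hle : (mono (cst l) <= val b)%MM.
  apply/mnm_lepP => l'; rewrite mono_cst //; case: eqP => [<-|] //.
set a := (val b - mono (cst l))%MM.
have ha : (a + mono (cst l))%MM = val b by rewrite submK.
have hda : (mdeg a + d.-1 = mdeg b)%N by rewrite -(mdeg_mono (cst l) d0) -mdegD ha.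
have hbD : (mdeg b <= D)%N by have := bmdeg b; rewrite ltnS.
have ha' : (mdeg a < (D - d.-1).+1)%N.
  by rewrite ltnS (leq_subRL _ dD) addnC hda.
have hb2 : (mdeg (a + U_(l))%MM < D.+1)%N.
  rewrite mdegD mdeg1 ltnS; apply: leq_trans hbD; rewrite -hda leq_add2l.
  by apply: leq_trans d2.
exists (BMultinom ha'), (BMultinom hb2); split.
  by rewrite /= mdegD mdeg1 -hda ltn_add2l.
apply/rowP => c; rewrite !mxE enum_rankK /= macE_T0 // ha.
have -> : (val (enum_val c) == (a + U_(l))%MM) = (c == enum_rank (BMultinom hb2)).
  by rewrite -enum_val_eq -val_eqE.
by rewrite val_eqE !enum_val_eq.
Qed.

Lemma span_delta k (b : Mon) : (mdeg b <= k)%N ->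
  (delta_mx (0 : 'I_1) (enum_rank b) <= Mac D T0 + Red)%MS.
Proof.
elim: k b => [|k IH] b hb.
  case: (boolP [exists l, d.-1 <= b l]%N) => [/existsP [l hl]|hn].
    have [a' [b2 [hlt _]]] := rowB hl.
    by move: hb; rewrite leqn0 => /eqP e; rewrite e in hlt.
  apply: caseA => l; rewrite ltnNge; apply/negP => hl; case/negP: hn.
  by apply/existsP; exists l.
case: (boolP [exists l, d.-1 <= b l]%N) => [/existsP [l hl]|hn].
  have [a' [b2 [hlt hrow]]] := rowB hl.
  have -> : delta_mx (0 : 'I_1) (enum_rank b) =
      row (enum_rank ((a', l) : RowT)) (Mac D T0) + delta_mx (0 : 'I_1) (enum_rank b2).
    by rewrite hrow subrK.
  apply: addmx_sub; first exact: submx_trans (row_sub _ _) (addsmxSl _ _).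
  by apply: IH; rewrite -ltnS; apply: leq_trans hlt hb.
apply: caseA => l; rewrite ltnNge; apply/negP => hl; case/negP: hn.
by apply/existsP; exists l.
Qed.

Lemma witness_rank : (#|{: Mon}| <= \rank (Mac D T0) + (d.-1) ^ n)%N.
Proof.
have h1 : (1%:M <= Mac D T0 + Red)%MS.
  apply/row_subP => c; rewrite row1 -[c]enum_valK.
  exact: (span_delta (leqnn _)).
have := mxrankS h1; rewrite mxrank1 => h2.
apply: leq_trans h2 _; apply: leq_trans (mxrank_adds_leqif _ _).1 _.
rewrite leq_add2l; apply: leq_trans (rank_leq_row _) _.
by rewrite card_ffun !card_ord.
Qed.
End Witness.
Section PolyMinor.
Variables (K : comNzRingType) (n d D : nat).
Local Notation Mon := ('X_{1..n < D.+1}).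
Local Notation RowT := (('X_{1..n < (D - d.-1).+1} * 'I_n)%type).

Definition macP (a : 'X_{1..n}) (i : 'I_n) (b : 'X_{1..n}) : coordpoly K n d :=
  \sum_(j : midx n d | cnd i j && ((a + mono j)%MM == b)) ('X_(enum_rank j) : coordpoly K n d)
  - (b == (a + U_(i))%MM)%:R.

Definition MacP : 'M[coordpoly K n d]_(#|{: RowT}|, #|{: Mon}|) :=
  \matrix_(r, c) macP (val (enum_val r).1) (enum_val r).2 (val (enum_val c)).

Lemma MacP_eval (T : tensor K n d) :
  map_mx (meval (fun v : 'I_#|{: midx n d}| => T (enum_val v))) MacP = Mac D T.
Proof.
apply/matrixP => r c; rewrite !mxE /macP /macE rmorphB rmorph_sum /= rmorph_nat.
by congr (_ - _); apply: eq_bigr => j _; rewrite mevalXU enum_rankK.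
Qed.

Definition minorP r (f : 'I_r -> 'I_#|{: RowT}|) (g : 'I_r -> 'I_#|{: Mon}|) : coordpoly K n d :=
  \det (colsub g (rowsub f MacP)).

Lemma minorP_eval r f g (T : tensor K n d) :
  peval (@minorP r f g) T = \det (colsub g (rowsub f (Mac D T))).
Proof.
by rewrite /peval /minorP -det_map_mx !map_mxsub MacP_eval.
Qed.
End PolyMinor.
Lemma contr0 (K : comNzRingType) n d (T : tensor K n d) : (1 < d)%N -> contr T 0 = 0.
Proof.
move=> d1; rewrite -(scale0r 0) contrZ; last by apply: ltnW.
by rewrite expr0n -subn1 subn_eq0 leqNgt d1 /= !scale0r.
Qed.

Lemma gen_bound (K : fieldType) (n d : nat) (T : tensor K n d) :
  (2 < d)%N -> (0 < n)%N ->
  (#|{: 'X_{1..n < ((d.-1)^n).+2}}| <= \rank (Mac ((d.-1)^n).+1 T) + (d.-1)^n)%N ->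
  forall s, uniq s -> (forall x, x \in s -> sol1 T x) -> (size s <= (d.-1)^n - 1)%N.
Proof.
move=> d3 n0 hrk s us hs.
set M := ((d.-1)^n)%N in hrk *.
have d1 : (1 < d)%N by apply: ltnW.
have m1 : (0 < d.-1)%N by rewrite -subn1 subn_gt0.
have M1 : (0 < M)%N by rewrite expn_gt0 m1.
rewrite leqNgt; apply/negP => hlt.
have hMs : (M <= size s)%N by move: hlt; rewrite -(ltn_add2r 1) !addn1 subn1 prednK.
pose pt (k : 'I_M.+1) : 'rV[K]_n := nth 0 (0 :: s) k.
have u0 : uniq (0 :: s).
  rewrite /= us andbT; apply/negP => /hs [] /eqP; by [].
have pt_inj : injective pt.
  move=> k1 k2 /eqP; rewrite /pt nth_uniq // => [/eqP/val_inj //||];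
  by rewrite /= ltnS (leq_trans _ hMs) // -ltnS.
have pt_sol : forall k, contr T (pt k) = pt k.
  move=> k; have : pt k \in 0 :: s by rewrite mem_nth //= ltnS (leq_trans _ hMs) // -ltnS.
  rewrite in_cons => /orP [/eqP ->|/hs [] //]; exact: contr0.
have dD : (d.-1 <= M.+1)%N.
  apply: leqW; rewrite /M -{1}(expn1 d.-1); exact: leq_pexp2l.
have hAE : Mac M.+1 T *m Emat M.+1 pt = 0.
  apply/matrixP => r k; rewrite [RHS]mxE.
  rewrite -(Mac_eval r d1 dD (pt_sol k)) mxE; apply: eq_bigr => c _.
  by rewrite [Emat _ _ _ _]mxE.
have hb := rank_bound hAE (CE1 pt_inj (leqnn _)).
by have := leq_trans hb hrk; rewrite addnS ltnn.
Qed.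

Lemma scale_sol (K : comNzRingType) n d (T : tensor K n d) (X : 'rV[K]_n) (u c : K) :
  (2 < d)%N -> contr T X = c *: X -> u ^+ (d - 2) * c = 1 -> contr T (u *: X) = u *: X.
Proof.
move=> d3 hX hu; rewrite contrZ; last by apply: leq_trans d3.
rewrite hX scalerA; congr (_ *: _).
have -> : d.-1 = (d - 2).+1 by rewrite -subn1 -subSn ?subSS //; apply: ltnW.
by rewrite exprSr mulrAC hu mul1r.
Qed.
Section RealPart.
Variable R : rcfType.
Local Notation C := (R[i]).
Local Notation rc := (real_complex R).

Lemma cvecE n (x : 'rV[R]_n) : cvec x = map_mx rc x.
Proof. by []. Qed.

Lemma cvecN n (x : 'rV[R]_n) : cvec (- x) = - cvec x.
Proof. by rewrite !cvecE map_mxN. Qed.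

Lemma cvec_inj n : injective (@cvec R n).
Proof. move=> x y; rewrite !cvecE; apply: map_mx_inj; exact: complexI. Qed.

Lemma cvec_eq0 n (x : 'rV[R]_n) : (cvec x == 0) = (x == 0).
Proof.
apply/eqP/eqP => [h|->]; last by rewrite cvecE map_mx0.
by apply: cvec_inj; rewrite h cvecE map_mx0.
Qed.

Lemma ratio_real n (x y : 'rV[R]_n) (u v : C) :
  x != 0 -> v != 0 -> u *: cvec x = v *: cvec y -> exists r : R, u = v * rc r.
Proof.
move=> nx nv e.
have [i hi] : exists i, x 0 i != 0.
  apply/existsP; apply: contraR nx => /existsPn h; apply/eqP/rowP => j.
  by rewrite mxE; apply/eqP; have := h j; rewrite negbK.
have := congr1 (fun M : 'rV[C]_n => M 0 i) e; rewrite /= !mxE /cplx.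
move=> e2; exists (y 0 i / x 0 i).
have hx : rc (x 0 i) != 0 by rewrite fmorph_eq0.
rewrite fmorph_div /= mulrA -e2 -mulrA divff ?mulr1 //.
Qed.

Lemma real_pow1 (r : R) N : (0 < N)%N -> r ^+ N = 1 -> r = 1 \/ r = -1.
Proof.
move=> N0 h.
have : `|r| ^+ N = 1 by rewrite -normrX h normr1.
move/eqP; rewrite pexpr_eq1 // => /eqP.
case: (ger0P r) => hr; first by left.
by move/eqP; rewrite eqr_oppLR => /eqP; right.
Qed.

Lemma neg1_neq1 : (-1 : R) != 1.
Proof. by rewrite lt_eqF // (lt_trans (ltrN10 R) ltr01). Qed.
End RealPart.
Lemma inv_gen (K : fieldType) n d (T : tensor K n d) x (z : K) :
  (2 < d)%N -> sol1 T x -> z ^+ (d - 2) = 1 -> sol1 T (z *: x).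
Proof.
move=> d3 [nx hx] hz; split.
  rewrite scaler_eq0 negb_or nx andbT; apply/eqP => z0.
  have hd2 : (d - 2 == 0)%N = false by apply/eqP; lia.
  by move: hz; rewrite z0 expr0n hd2 => /eqP; rewrite eq_sym oner_eq0.
by apply: (scale_sol (c := 1)) => //; rewrite ?scale1r ?mulr1.
Qed.

Lemma vec_neqN (K : numFieldType) n (X : 'rV[K]_n) : X != 0 -> - X != X.
Proof.
move=> nX; apply/negP => /eqP e.
have : X *+ 2 = 0 by rewrite mulr2n -{1}e addNr.
move/eqP; rewrite -scaler_nat scaler_eq0 pnatr_eq0 /=; exact/negP.
Qed.

Section Counting.
Variable R : rcfType.
Local Notation rc := (real_complex R).

Lemma ratio_pow (w : R[i]) (M i1 i2 : nat) n (x1 x2 : 'rV[R]_n) :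
  M.-primitive_root w -> x1 != 0 ->
  w ^+ i1 *: cvec x1 = w ^+ i2 *: cvec x2 ->
  exists r : R, w ^+ i1 = w ^+ i2 * rc r /\ r ^+ M = 1.
Proof.
move=> pw nx e.
have M0 : (0 < M)%N := prim_order_gt0 pw.
have w0 : w != 0 by rewrite (prim_root_eq0 pw) -lt0n.
have [r hr] := ratio_real nx (expf_neq0 i2 w0) e.
exists r; split => //.
have h1 : (w ^+ i1) ^+ M = 1 by rewrite -exprM mulnC exprM (prim_expr_order pw) expr1n.
have h2 : (w ^+ i2) ^+ M = 1 by rewrite -exprM mulnC exprM (prim_expr_order pw) expr1n.
move: h1; rewrite hr exprMn h2 mul1r -rmorphXn => /eqP; rewrite fmorph_eq1 => /eqP //.
Qed.

Lemma odd_count n d (T : tensor R[i] n d) B : (2 < d)%N -> odd d ->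
  (forall s, uniq s -> (forall x, x \in s -> sol1 T x) -> (size s <= B)%N) ->
  forall s : seq 'rV[R]_n, uniq s -> (forall x, x \in s -> sol1 T (cvec x)) ->
  (size s <= B %/ (d - 2))%N.
Proof.
move=> d3 od cb s us hs.
have M0 : (0 < d - 2)%N by lia.
have oM : odd (d - 2) by rewrite oddB ?od //; apply: ltnW.
have [z pz] := prim_root_ex R M0.
pose L := [seq z ^+ k *: cvec x | k <- iota 0 (d - 2), x <- s].
have hL : (size L <= B)%N.
  apply: cb.
    apply: allpairs_uniq => //; first exact: iota_uniq.
    move=> [k1 x1] [k2 x2] /allpairsPdep [k1' [x1' [hk1 hx1 [-> ->]]]].
    move=> /allpairsPdep [k2' [x2' [hk2 hx2 [-> ->]]]] /= e.
    have nx1 : x1' != 0 by have [] := hs _ hx1; rewrite cvec_eq0.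
    have [r [hr hr1]] := ratio_pow pz nx1 e.
    have r1 : r = 1.
      case: (real_pow1 M0 hr1) => // rN; move: hr1; rewrite rN -signr_odd oM expr1.
      by move/eqP; rewrite (negPf (neg1_neq1 R)).
    move: hr; rewrite r1 rmorph1 mulr1 => /eqP; rewrite (eq_prim_root_expr pz).
    move: hk1 hk2; rewrite !mem_iota !add0n /= => hk1 hk2.
    rewrite !modn_small //; move/eqP => ek; subst k2'.
    have zk : z ^+ k1' != 0 by apply: expf_neq0; rewrite (prim_root_eq0 pz) -lt0n.
    by move: e => /(scalerI zk) /cvec_inj ->.
  move=> X /allpairsPdep [k [x [hk hx ->]]].
  apply: inv_gen => //; first exact: hs.
  by rewrite -exprM mulnC exprM (prim_expr_order pz) expr1n.
by rewrite leq_divRL // mulnC; move: hL; rewrite size_allpairs size_iota.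
Qed.
End Counting.
Lemma contrN (K : comNzRingType) n d (T : tensor K n d) X :
  (0 < d)%N -> contr T (- X) = (-1) ^+ d.-1 *: contr T X.
Proof. by move=> d0; rewrite -scaleN1r contrZ. Qed.

Section Counting2.
Variable R : rcfType.
Local Notation rc := (real_complex R).

Lemma odd_neg n d (T : tensor R[i] n d) (x : 'rV[R]_n) : (2 < d)%N -> odd d ->
  sol2 T (cvec x) -> exists y : 'rV[R]_n, sol1 T (cvec y) /\ x = - y.
Proof.
move=> d3 od [nx hx]; exists (- x); split; last by rewrite opprK.
rewrite cvecN; split; first by rewrite oppr_eq0.
have oe : odd d.-1 = false by lia.
rewrite contrN; last lia.
by rewrite -signr_odd oe expr0 scale1r hx.
Qed.

Lemma even_neg n d (T : tensor R[i] n d) (x : 'rV[R]_n) : (2 < d)%N -> ~~ odd d ->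
  sol1 T (cvec x) \/ sol2 T (cvec x) -> sol1 T (cvec (- x)) \/ sol2 T (cvec (- x)).
Proof.
move=> d3 ev h.
have oe : odd d.-1 = true by lia.
have cN : contr T (- cvec x) = - contr T (cvec x).
  rewrite contrN; last lia.
  by rewrite -signr_odd oe expr1 scaleN1r.
rewrite cvecN; case: h => [[nx hx]|[nx hx]].
  by left; split; rewrite ?oppr_eq0 // cN hx.
by right; split; rewrite ?oppr_eq0 // cN hx.
Qed.

Lemma even_count n d (T : tensor R[i] n d) B : (2 < d)%N -> ~~ odd d ->
  (forall s, uniq s -> (forall x, x \in s -> sol1 T x) -> (size s <= B)%N) ->
  forall s : seq 'rV[R]_n, uniq s ->
  (forall x, x \in s -> sol1 T (cvec x) \/ sol2 T (cvec x)) ->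
  (size s <= (2 * B) %/ (d - 2))%N.
Proof.
move=> d3 ev cb s us hs.
pose M := (2 * (d - 2))%N.
have M0 : (0 < M)%N by rewrite /M; lia.
have [w pw] := prim_root_ex R M0.
have w0 : w != 0 by rewrite (prim_root_eq0 pw) -lt0n.
have wd : w ^+ (d - 2) = -1.
  have : (w ^+ (d - 2)) ^+ 2 = 1 by rewrite -exprM mulnC (prim_expr_order pw).
  move/eqP; rewrite sqrf_eq1 => /orP [/eqP h|/eqP //].
  exfalso; have := prim_order_dvd pw (d - 2); rewrite h eqxx => /dvdn_leq.
  rewrite /M; lia.
have wM : forall k, w ^+ (M * k) = 1.
  by move=> k; rewrite exprM (prim_expr_order pw) expr1n.
pose e (x : 'rV[R]_n) := (contr T (cvec x) != cvec x).
pose L := [seq w ^+ (2 * k + e x) *: cvec x | k <- iota 0 (d - 2)./2, x <- s].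
have hL : (size L <= B)%N.
  apply: cb.
    apply: allpairs_uniq => //; first exact: iota_uniq.
    move=> [k1 x1] [k2 x2] /allpairsPdep [k1' [x1' [hk1 hx1 [-> ->]]]].
    move=> /allpairsPdep [k2' [x2' [hk2 hx2 [-> ->]]]] /= e12.
    move: hk1 hk2; rewrite !mem_iota !add0n /= => hk1 hk2.
    have nx1 : x1' != 0.
      by rewrite -cvec_eq0; case: (hs _ hx1) => [[]|[]].
    have [r [hr hr1]] := ratio_pow pw nx1 e12.
    have hi1 : (2 * k1' + e x1' < d - 2)%N by case: (e x1'); lia.
    have hi2 : (2 * k2' + e x2' < d - 2)%N by case: (e x2'); lia.
    case: (real_pow1 M0 hr1) => rv; move: hr; rewrite rv.
      rewrite rmorph1 mulr1 => /eqP; rewrite (eq_prim_root_expr pw) !modn_small;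
        try (rewrite /M; lia).
      move/eqP => ei; move: e12; rewrite ei.
      have wk : w ^+ (2 * k2' + e x2') != 0 by apply: expf_neq0.
      move=> /(scalerI wk) /cvec_inj ex; subst x2'.
      by congr (_, _); move: ei; lia.
    rewrite rmorphN rmorph1 -wd -exprD => /eqP.
    rewrite (eq_prim_root_expr pw) !modn_small; try (rewrite /M; lia).
  move=> X /allpairsPdep [k [x [hk hx ->]]].
  move: hk; rewrite mem_iota add0n /= => hk.
  case: (hs x hx) => [h1|[nX hX]].
    have -> : e x = false by rewrite /e (proj2 h1) eqxx.
    apply: inv_gen => //; rewrite addn0 -exprM.
    have -> : (2 * k * (d - 2) = M * k)%N by rewrite /M; lia.
    exact: wM.
  have -> : e x = true by rewrite /e hX vec_neqN.
  split; first by rewrite scaler_eq0 negb_or expf_neq0.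
  apply: (scale_sol (c := -1)) => //; first by rewrite scaleN1r.
  rewrite -exprM.
  have -> : ((2 * k + true) * (d - 2) = M * k + (d - 2))%N by rewrite /M; lia.
  by rewrite exprD wM mul1r wd mulrNN mulr1.
have e2 : (d - 2 = 2 * (d - 2)./2)%N by lia.
rewrite leq_divRL; last by lia.
rewrite [X in (_ * X <= _)%N]e2.
rewrite mulnCA leq_mul2l /= mulnC.
by move: hL; rewrite size_allpairs size_iota.
Qed.
End Counting2.
Theorem theorem6p1 (R : realType) (n d : nat) (hn : (2 <= n)%N) (hd : (3 <= d)%N) :
  exists ps : seq (coordpoly R[i] n d),
    proper_variety ps /\
    (* complex symmetric tensors outside Sigma *)
    (forall T : tensor R[i] n d, sym_tensor T -> ~ in_variety ps T ->
       (forall s : seq 'rV[R[i]]_n, uniq s -> (forall x, x \in s -> sol1 T x) ->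
          (size s <= (d.-1) ^ n - 1)%N) /\
       (forall (x : 'rV[R[i]]_n) (z : R[i]), sol1 T x -> z ^+ (d - 2) = 1 ->
          sol1 T (z *: x))) /\
    (* real symmetric tensors outside Sigma *)
    (forall T : tensor R n d, sym_tensor T -> ~ in_variety ps (ctensor T) ->
       (odd d ->
          (forall s : seq 'rV[R]_n, uniq s ->
             (forall x, x \in s -> sol1 (ctensor T) (cvec x)) ->
             (size s <= ((d.-1) ^ n - 1) %/ (d - 2))%N) /\
          (forall x : 'rV[R]_n, sol2 (ctensor T) (cvec x) ->
             exists y : 'rV[R]_n, sol1 (ctensor T) (cvec y) /\ x = - y)) /\
       (~~ odd d ->
          (forall s : seq 'rV[R]_n, uniq s ->
             (forall x, x \in s ->
                sol1 (ctensor T) (cvec x) \/ sol2 (ctensor T) (cvec x)) ->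
             (size s <= (2 * ((d.-1) ^ n - 1)) %/ (d - 2))%N) /\
          (forall x : 'rV[R]_n,
             sol1 (ctensor T) (cvec x) \/ sol2 (ctensor T) (cvec x) ->
             sol1 (ctensor T) (cvec (- x)) \/ sol2 (ctensor T) (cvec (- x))))).
Proof.
have d3 : (2 < d)%N := hd.
have n0 : (0 < n)%N by apply: ltnW.
pose D := ((d.-1) ^ n).+1.
have dD : (d.-1 <= D)%N.
  apply: leqW; rewrite -{1}(expn1 d.-1); apply: leq_pexp2l => //; lia.
pose T0c := @T0 R[i] n d.
have [f [g hfg]] := minor_exists (Mac D T0c).
exists [:: @minorP R[i] n d D _ f g].
have hw := @witness_rank R[i] n d D d3 dD.
have cb : forall T : tensor R[i] n d, ~ in_variety [:: @minorP R[i] n d D _ f g] T ->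
    sym_tensor T ->
    forall s : seq 'rV[R[i]]_n, uniq s -> (forall x, x \in s -> sol1 T x) ->
      (size s <= (d.-1) ^ n - 1)%N.
  move=> T hnv hsym.
  have hP : peval (@minorP R[i] n d D _ f g) T != 0.
    by apply/negP => /eqP h; apply: hnv; split => //=; rewrite h eqxx.
  rewrite minorP_eval in hP.
  have hr := minor_rank hP.
  apply: gen_bound => //.
  apply: leq_trans hw _; rewrite leq_add2r; exact: hr.
split.
  exists T0c; split; first exact: T0_sym.
  move=> [_ /=]; rewrite andbT minorP_eval => /eqP h.
  by move: hfg; rewrite h eqxx.
split.
  move=> T hsym hnv; split; first exact: cb.
  by move=> x z hx hz; apply: inv_gen.
move=> T hsym hnv.
have hsymc : sym_tensor (ctensor T).
  by move=> s j; rewrite !ffunE hsym.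
have cbT := cb _ hnv hsymc.
split.
  move=> od; split; first exact: odd_count.
  by move=> x hx; apply: odd_neg.
move=> ev; split; first exact: even_count.
by move=> x hx; apply: even_neg.
Qed.
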